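(* For all $a,b\in\mathbb{C}$ and integers $n\ge0$, $$\sum_{k=0}^n\binom{n}{k}a^kb^{n-k}H_k(2)=H_n(2)(a+b)^n+2\sum_{k=1}^n(a+b)^{n-k}b^k\,\frac{H_{k-1}-H_{n-k}}{k}.$$
   Context: $H_n=\sum_{k=1}^n\frac1k$ (with $H_0=0$) and $H_n^{(2)}=\sum_{k=1}^n\frac1{k^2}$. The multiple harmonic-like number $H_n(2)=\sum_{1\le k_1+k_2\le n}\frac{1}{k_1k_2}$ (over positive integers), which equals $H_n^2-H_n^{(2)}$. Convention $0^0=1$. *)

(* Defs.v *)
From HB Require Import structures.
From mathcomp Require Import all_boot all_order all_algebra.
From mathcomp Require Import complex.
From mathcomp Require Import reals Rstruct.
Set Implicit Arguments. Unset Strict Implicit. Unset Printing Implicit Defensive.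
Import Order.TTheory GRing.Theory Num.Theory.
Local Open Scope ring_scope.

Definition CC : Type := complex Rdefinitions.R.

Definition harm {F : fieldType} (n : nat) : F :=
  \sum_(1 <= k < n.+1) (k%:R)^-1.

Definition harm2 {F : fieldType} (n : nat) : F :=
  \sum_(1 <= k1 < n.+1) \sum_(1 <= k2 < n.+1 | (k1 + k2 <= n)%N)
     ((k1 * k2)%N%:R)^-1.

(* Main.v *)
Require Import Defs.
From HB Require Import structures.
From mathcomp Require Import all_boot all_order all_algebra.
From mathcomp Require Import complex.
From mathcomp Require Import reals Rstruct.
From mathcomp Require Import ring zify.
Import GRing.Theory Num.Theory.
Local Open Scope ring_scope.

Section Gen.
Variable R : comRingType.

Definition Df (g : nat -> R) : nat -> R := fun k => g k - g k.+1.
Definition Dm (m : nat) (f : nat -> R) : nat -> R := iter m Df f.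

Lemma DmS m f x : Dm m (fun k => f k.+1) x = Dm m f x.+1.
Proof.
elim: m x => [|m IH] x //=.
by rewrite /Df -/(Dm m _) !IH.
Qed.

Lemma DmSS m f x : Dm m.+1 f x = Dm m f x - Dm m f x.+1.
Proof. by []. Qed.

Lemma pascal_sum n (X : nat -> R) :
  \sum_(m < n.+2) ('C(n.+1, m))%:R * X m =
  \sum_(m < n.+1) ('C(n, m))%:R * X m + \sum_(m < n.+1) ('C(n, m))%:R * X m.+1.
Proof.
rewrite big_ord_recl.
have -> : \sum_(i < n.+1) ('C(n.+1, (lift ord0 i)))%:R * X (lift ord0 i)
   = \sum_(i < n.+1) ('C(n, i.+1))%:R * X i.+1 + \sum_(i < n.+1) ('C(n, i))%:R * X i.+1.
  by rewrite -big_split /=; apply: eq_bigr => i _; rewrite binS natrD mulrDl.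
rewrite addrA; congr (_ + _).
rewrite big_ord_recr /= (bin_small (ltnSn n)) mul0r addr0.
rewrite [in RHS]big_ord_recl /= !bin0.
by congr (_ + _).
Qed.

Definition LH (a b : R) n (f : nat -> R) :=
  \sum_(k < n.+1) ('C(n, k))%:R * a ^+ k * b ^+ (n - k) * f k.
Definition RH (c b : R) n (f : nat -> R) :=
  \sum_(m < n.+1) ('C(n, m))%:R * c ^+ (n - m) * b ^+ m * Dm m f (n - m).

Lemma gen_lemma (a b : R) n f : LH a b n f = RH (a + b) b n f.
Proof.
elim: n f => [|n IH] f.
  by rewrite /LH /RH !big_ord1 /= !expr0 !mulr1.
have L1 : LH a b n.+1 f = b * LH a b n f + a * LH a b n (fun k => f k.+1).
  rewrite /LH.
  have := pascal_sum n (fun k => a ^+ k * b ^+ (n.+1 - k) * f k).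
  under eq_bigr do rewrite !mulrA.
  move=> ->; rewrite !mulr_sumr; congr (_ + _); apply: eq_bigr => -[i hi'] _ /=.
    rewrite subSn; last by rewrite -ltnS.
    by rewrite exprS; ring.
  by rewrite subSS exprS; ring.
have R1 : RH (a + b) b n.+1 f = (a + b) * RH (a + b) b n (fun k => f k.+1)
     + b * (RH (a + b) b n f - RH (a + b) b n (fun k => f k.+1)).
  rewrite /RH.
  have := pascal_sum n (fun m => (a + b) ^+ (n.+1 - m) * b ^+ m * Dm m f (n.+1 - m)).
  under eq_bigr do rewrite !mulrA.
  move=> ->; rewrite -sumrB !mulr_sumr; congr (_ + _); apply: eq_bigr => -[i hi'] _ /=.
    have hi : (i <= n)%N by rewrite -ltnS.
    rewrite subSn // DmS exprS; ring.
  rewrite subSS /Df DmS exprS; ring.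
rewrite L1 R1 !IH; ring.
Qed.
End Gen.
Section H.
Variable F : numFieldType.

Lemma harm0 : harm 0 = 0 :> F.
Proof. by rewrite /harm big_geq. Qed.

Lemma harmS n : harm n.+1 = harm n + (n.+1%:R)^-1 :> F.
Proof. by rewrite /harm big_nat_recr. Qed.

Lemma natr_neq0 k : (0 < k)%N -> (k%:R : F) != 0.
Proof. by move=> hk; rewrite pnatr_eq0 -lt0n. Qed.

Lemma inner_sum n k1 (g : nat -> F) : (k1 <= n)%N ->
  \sum_(1 <= k2 < n.+1 | (k1 + k2 <= n)%N) g k2 = \sum_(1 <= k2 < (n - k1).+1) g k2.
Proof.
move=> hk.
rewrite big_mkcond (big_cat_nat _ (n:=(n - k1).+1)) /=; [|lia|lia].
rewrite [X in _ + X]big_nat_cond [X in _ + X]big1 ?addr0.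
  by apply: eq_big_nat => i /andP[h1 h2]; rewrite ifT //; lia.
by move=> i /andP[/andP[h1 h2] _]; rewrite ifF //; lia.
Qed.

Lemma harm2E n : harm2 n = \sum_(1 <= k < n.+1) (k%:R)^-1 * harm (n - k) :> F.
Proof.
rewrite /harm2; apply: eq_big_nat => k /andP[h1 h2].
rewrite inner_sum; last by lia.
rewrite /harm mulr_sumr; apply: eq_bigr => j _.
by rewrite natrM invfM.
Qed.

Lemma rev_sum n : \sum_(1 <= k < n.+1) (((n.+1 - k)%N)%:R)^-1 = harm n :> F.
Proof.
rewrite big_nat_rev /harm; apply: eq_big_nat => k /andP[h1 h2].
by congr (_%:R^-1); lia.
Qed.

Lemma harm2S n : harm2 n.+1 = harm2 n + 2 * harm n / (n.+1%:R) :> F.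
Proof.
rewrite !harm2E big_nat_recr //= subnn harm0 mulr0 addr0.
have -> : \sum_(1 <= k < n.+1) (k%:R)^-1 * harm (n.+1 - k)
   = \sum_(1 <= k < n.+1) ((k%:R)^-1 * harm (n - k) +
        (n.+1%:R)^-1 * ((k%:R)^-1 + (((n.+1 - k)%N)%:R)^-1)) :> F.
  apply: eq_big_nat => k /andP[h1 h2].
  rewrite subSn; last by lia.
  rewrite harmS.
  have hk : (k%:R : F) != 0 by apply: natr_neq0.
  have hn : (n.+1%:R : F) != 0 by apply: natr_neq0.
  have hnk : (((n - k).+1)%:R : F) != 0 by apply: natr_neq0.
  have e : (((n - k).+1)%:R : F) = n.+1%:R - k%:R.
    by rewrite -natrB; [congr _%:R; lia | lia].
  move: hnk; rewrite e => hnk.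
  field.
  have -> : 1 + n%:R = n.+1%:R :> F by rewrite -natr1 addrC.
  by rewrite hnk hk hn.
rewrite big_split /=; congr (_ + _).
rewrite -mulr_sumr big_split /= rev_sum /harm.
field; rewrite addrC natr1; exact: natr_neq0.
Qed.
End H.
Lemma alg (F : fieldType) (X Y hm hp P M B : F) : P != 0 -> M != 0 -> P + M != 0 -> B != 0 ->
  X * (M * B) = 2 * (hm - hp) -> Y * (M * ((P + M) * B / P)) = 2 * (hm - (hp + P^-1)) ->
  (X - Y) * ((P + M) * B) = 2 * (hm + M^-1 - hp).
Proof.
move=> hP hM hPM hB eX eY.
have -> : X = 2 * (hm - hp) / (M * B).
  by rewrite -eX; field; rewrite hM hB.
have -> : Y = 2 * (hm - (hp + P^-1)) / (M * ((P + M) * B / P)).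
  by rewrite -eY; field; rewrite hM hB hP hPM.
by field; rewrite hM hB hP hPM.
Qed.
Arguments Dm {R}.

Section B.
Variable F : numFieldType.

Lemma lemB m p : Dm m.+1 (@harm2 F) p * (((m.+1 * 'C(p + m.+1, m.+1))%N)%:R)
   = 2 * (harm m - harm p).
Proof.
elim: m p => [|m IH] p.
  rewrite DmSS /Dm /= harm2S harm0 mul1n addn1 bin1.
  field; rewrite addrC natr1; exact: natr_neq0.
rewrite DmSS.
set X := Dm m.+1 _ p; set Y := Dm m.+1 _ p.+1.
have h1 : (p.+1 * 'C(p.+1 + m.+1, m.+1) = (p + m.+2) * 'C(p + m.+1, m.+1))%N.
  have := mul_bin_down (p + m.+2) m.+1.
  have E1 : (p + m.+2).-1 = p + m.+1 by lia.
  have E2 : (p + m.+2 - m.+1 = p.+1)%N by lia.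
  have E3 : (p.+1 + m.+1 = p + m.+2)%N by lia.
  by rewrite E1 E2 E3 => ->.
have h2 : (m.+2 * 'C(p + m.+2, m.+2) = (p + m.+2) * 'C(p + m.+1, m.+1))%N.
  have := mul_bin_diag (p + m.+2) m.+1.
  have E1 : (p + m.+2).-1 = p + m.+1 by lia.
  by rewrite E1 => <-.
have E : ((p + m.+2)%:R : F) = p.+1%:R + m.+1%:R.
  by rewrite -natrD; congr _%:R; lia.
rewrite h2 natrM E harmS.
have hP : (p.+1%:R : F) != 0 by apply: natr_neq0.
apply: alg => //.
- by apply: natr_neq0.
- by rewrite -natrD natr_neq0 //; lia.
- by rewrite natr_neq0 // bin_gt0; lia.
- by have := IH p; rewrite natrM.
- have := IH p.+1; rewrite natrM harmS.
  have -> : ('C(p.+1 + m.+1, m.+1)%:R : F) = (p.+1%:R + m.+1%:R) * 'C(p + m.+1, m.+1)%:R / p.+1%:R.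
    apply: (mulfI hP); rewrite -natrM h1 natrM E; field; rewrite addrC natr1; exact: hP.
  done.
Qed.
End B.

Theorem corollary4 (a b : CC) (n : nat) :
  \sum_(k < n.+1) ('C(n, k))%:R * a ^+ k * b ^+ (n - k) * harm2 k
  = harm2 n * (a + b) ^+ n
    + 2 * \sum_(1 <= k < n.+1)
            (a + b) ^+ (n - k) * b ^+ k * ((harm k.-1 - harm (n - k)) / k%:R).
Proof.
have := @gen_lemma _ a b n (@harm2 CC); rewrite /LH /RH => ->.
rewrite big_ord_recl /= bin0 subn0 expr0 mulr1 mul1r.
rewrite mulrC; congr (_ + _).
rewrite big_add1 /= big_mkord mulr_sumr; apply: eq_bigr => -[i hi] _ /=.
have hB := lemB CC i (n - i.+1).
have E : (n - i.+1 + i.+1 = n)%N by lia.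
rewrite E natrM in hB.
have hk : (i.+1%:R : CC) != 0 by apply: natr_neq0.
have hk' : 1 + i%:R != 0 :> CC by rewrite addrC natr1.
have hC : ('C(n, i.+1)%:R : CC) != 0 by rewrite natr_neq0 // bin_gt0; lia.
have HH : Dm i.+1 (@harm2 CC) (n - i.+1) = 2 * (harm i - harm (n - i.+1)) / (i.+1%:R * 'C(n, i.+1)%:R).
  by rewrite -hB; field; rewrite hC hk'.
rewrite /bump /= !add1n.
move: HH; rewrite /Dm /= => ->; field; by rewrite hC hk'.
Qed.
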